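(* Let $n$ be an odd positive integer and let $a,b$ be distinct integers with $0<a,b<n$, so that $G=C_{2n}(a,b,n)$ is a $5$-regular circulant graph. If $a$ and $b$ have the same parity (both even or both odd), then $G$ is word-representable.
   Context: Two distinct letters $x,y$ alternate in a word $w$ if, after deleting all other letters from $w$, the resulting word is of the form $xyxy\cdots$ or $yxyx\cdots$ (of even or odd length). A graph $G=(V,E)$ is word-representable if there is a word $w$ over the alphabet $V$, containing every letter of $V$ at least once, such that for all distinct $x,y\in V$, $xy\in E$ if and only if $x$ and $y$ alternate in $w$. For an integer $m$ and a set $R$ of positive integers each at most $m/2$, the circulant graph $C_m(R)$ has vertex set $\{0,1,\dots,m-1\}$, with $i$ and $j$ adjacent iff $\min(|i-j|,\,m-|i-j|)\in R$. $C_{2n}(a,b,n)$ denotes the circulant graph on $2n$ vertices with jump set $\{a,b,n\}$. *)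

(* Defs.v *)
From mathcomp Require Import all_boot.
Set Implicit Arguments. Unset Strict Implicit. Unset Printing Implicit Defensive.

(* Two distinct letters x, y alternate in w: after deleting all other letters,
   the resulting word has no two equal consecutive letters, i.e. it is
   xyxy... or yxyx... (of even or odd length). *)
Definition alternate (T : eqType) (w : seq T) (x y : T) : bool :=
  sorted (fun u v => u != v) [seq z <- w | (z == x) || (z == y)].

Definition word_representable (T : finType) (E : rel T) : Prop :=
  exists w : seq T, (forall x : T, x \in w) /\
    (forall x y : T, x != y -> (E x y <-> alternate w x y)).

Definition natdist (i j : nat) : nat := if i <= j then j - i else i - j.

Definition circulant (m : nat) (R : seq nat) : rel 'I_m :=
  fun i j => (i != j) &&
    (minn (natdist i j) (m - natdist i j) \in R).

(* Main.v *)
Require Import Defs.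
From mathcomp Require Import all_boot.
From mathcomp Require Import zify.
Set Implicit Arguments. Unset Strict Implicit. Unset Printing Implicit Defensive.

Definition orient (T : finType) (E : rel T) (h : T -> nat) : rel T :=
  fun u v => E u v && (h u < h v).
Definition reach (T : finType) (E : rel T) (h : T -> nat) := connect (orient E h).
Definition sseq (T : finType) (h : T -> nat) : seq T :=
  sort (fun u v : T => h u <= h v) (enum T).
Definition blk (T : finType) (h : T -> nat) (S : pred T) : seq T :=
  [seq z <- sseq h | S z].
Definition anc (T : finType) (E : rel T) (h : T -> nat) (x : T) : pred T :=
  fun w => reach E h w x.
Definition cset (T : finType) (E : rel T) (h : T -> nat) (x : T) : pred T :=
  fun w => [exists z, ((reach E h z x) || [exists a, reach E h a x && orient E h a z])
                        && reach E h w z].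
Definition Q4 (T : finType) (E : rel T) (h : T -> nat) (x : T) : seq T :=
  blk h (cset E h x) ++ blk h (anc E h x) ++ blk h (predC (cset E h x))
    ++ blk h (predC (anc E h x)).
Definition lin (T : finType) (h : T -> nat) (D : pred T) : seq T :=
  blk h D ++ blk h (predC D).
Definition part (T : finType) (E : rel T) (h : T -> nat) (x y : T) : seq T :=
  if reach E h x y then Q4 E h x else lin h (anc E h y) ++ lin h (anc E h x).
Definition Wd (T : finType) (E : rel T) (h : T -> nat) : seq T :=
  sseq h ++ flatten [seq part E h x y | x <- enum T, y <- enum T].

Definition STprop (T : finType) (E : rel T) (h : T -> nat) : Prop :=
  forall a z x y, E a z -> h a < h z -> reach E h a x -> reach E h x y ->
    reach E h y z -> x != y -> E x y.

Definition pr2 (T : eqType) (x y : T) : pred T := fun z => (z == x) || (z == y).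

Lemma sseq_uniq (T : finType) (h : T -> nat) : uniq (sseq h).
Proof. by rewrite /sseq sort_uniq enum_uniq. Qed.

Lemma mem_sseq (T : finType) (h : T -> nat) x : x \in sseq h.
Proof. by rewrite /sseq mem_sort mem_enum. Qed.

Lemma pair_filter (T : finType) (h : T -> nat) (u v : T) :
  h u < h v -> [seq z <- sseq h | pr2 u v z] = [:: u; v].
Proof.
move=> huv.
have uv : u != v by apply/eqP=> e; rewrite e ltnn in huv.
have tr : transitive (fun u v : T => h u <= h v) by move=> a b c; apply: leq_trans.
have tot : total (fun u v : T => h u <= h v) by move=> a b; apply: leq_total.
have so : sorted (fun u v : T => h u <= h v) [seq z <- sseq h | pr2 u v z].
  by apply: sorted_filter => //; apply: sort_sorted.
have un : uniq [seq z <- sseq h | pr2 u v z] by apply: filter_uniq; apply: sseq_uniq.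
have mem : [seq z <- sseq h | pr2 u v z] =i [:: u; v].
  by move=> z; rewrite mem_filter mem_sseq andbT !inE.
have pe : perm_eq [seq z <- sseq h | pr2 u v z] [:: u; v].
  by apply: uniq_perm => //=; rewrite inE uv.
have sz := perm_size pe.
move: so un mem sz; case: [seq z <- sseq h | pr2 u v z] => [|a [|b [|c l]]] //= so un mem _.
have ha : a \in [:: u; v] by rewrite -mem inE eqxx.
have hb : b \in [:: u; v] by rewrite -mem !inE eqxx orbT.
move: un; rewrite inE andbT => ab.
move: ha hb ab so; rewrite !inE => /orP[] /eqP -> /orP[] /eqP -> //=; rewrite ?eqxx //.
by rewrite andbT leqNgt huv.
Qed.

Lemma blk_filter (T : finType) (h : T -> nat) (S : pred T) (u v : T) :
  h u < h v -> [seq z <- blk h S | pr2 u v z] = [seq z <- [:: u; v] | S z].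
Proof.
move=> huv; rewrite /blk.
have -> : [seq z <- [seq z <- sseq h | S z] | pr2 u v z] =
          [seq z <- [seq z <- sseq h | pr2 u v z] | S z].
  by rewrite -!filter_predI; apply: eq_filter => z /=; rewrite andbC.
by rewrite pair_filter.
Qed.

Lemma blk_filter1 (T : finType) (h : T -> nat) (S : pred T) (x y w : T) :
  (forall z, S z && pr2 x y z = (z == w)) ->
  [seq z <- blk h S | pr2 x y z] = [:: w].
Proof.
move=> H; rewrite /blk -filter_predI.
have -> : [seq z <- sseq h | predI (pr2 x y) S z] = [seq z <- sseq h | pred1 w z].
  by apply: eq_filter => z /=; rewrite andbC H.
by apply: filter_pred1_uniq; [apply: sseq_uniq | apply: mem_sseq].
Qed.

Lemma path_h (T : finType) (E : rel T) (h : T -> nat) u p :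
  path (orient E h) u p -> h u + size p <= h (last u p).
Proof.
elim: p u => [|w p IH] u /=; first by rewrite addn0.
move=> /andP[/andP[_ huw] pw]; have := IH w pw; lia.
Qed.

Lemma reach_lt (T : finType) (E : rel T) (h : T -> nat) u v :
  reach E h u v -> u != v -> h u < h v.
Proof.
move=> /connectP[p pp ->]; have := path_h pp.
case: p pp => [|w p] //= pp hh; first by rewrite eqxx.
move=> _; move: hh; lia.
Qed.

Lemma reach_le (T : finType) (E : rel T) (h : T -> nat) u v :
  reach E h u v -> h u <= h v.
Proof.
move=> r; case: (eqVneq u v) => [->//|ne]; exact: ltnW (reach_lt r ne).
Qed.

Definition dset (T : finType) (E : rel T) (h : T -> nat) (S : pred T) :=
  forall w z, orient E h w z -> S z -> S w.

Lemma anc_ds (T : finType) (E : rel T) (h : T -> nat) x : dset E h (anc E h x).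
Proof.
move=> w z o; rewrite /anc /reach => r.
by apply: connect_trans r; apply: connect1.
Qed.

Lemma cset_ds (T : finType) (E : rel T) (h : T -> nat) x : dset E h (cset E h x).
Proof.
move=> w z o /existsP[z0 /andP[c r]]; apply/existsP; exists z0; rewrite c /=.
by apply: connect_trans r; apply: connect1.
Qed.

Lemma anc_sub (T : finType) (E : rel T) (h : T -> nat) x w :
  anc E h x w -> cset E h x w.
Proof.
move=> a; apply/existsP; exists w; apply/andP; split; last exact: connect0.
by apply/orP; left; exact: a.
Qed.

Lemma anc_out (T : finType) (E : rel T) (h : T -> nat) x a z :
  anc E h x a -> orient E h a z -> cset E h x z.
Proof.
move=> aa o; apply/existsP; exists z; apply/andP; split; last exact: connect0.
by apply/orP; right; apply/existsP; exists a; apply/andP; split.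
Qed.

Lemma Q4_edge (T : finType) (E : rel T) (h : T -> nat) x u v :
  orient E h u v -> [seq z <- Q4 E h x | pr2 u v z] = [:: u; v; u; v].
Proof.
move=> o; have huv : h u < h v by case/andP: o.
rewrite /Q4 !filter_cat !blk_filter //=.
have d1 := @anc_ds T E h x u v o; have d2 := @cset_ds T E h x u v o.
have s1 := @anc_sub T E h x u; have s2 := @anc_out T E h x u v.
move: d1 d2 s1 s2; rewrite /predC /=.
case: (anc E h x u); case: (anc E h x v); case: (cset E h x u); case: (cset E h x v);
  move=> //= d1 d2 s1 s2; try (by have := d1 isT); try (by have := d2 isT);
  try (by have := s1 isT); try (by have := s2 isT o).
Qed.

Lemma lin_edge (T : finType) (E : rel T) (h : T -> nat) (D : pred T) u v :
  dset E h D -> orient E h u v -> [seq z <- lin h D | pr2 u v z] = [:: u; v].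
Proof.
move=> ds o; have huv : h u < h v by case/andP: o.
rewrite /lin !filter_cat !blk_filter //=.
have d1 := ds u v o; move: d1; rewrite /predC /=.
by case: (D u); case: (D v) => //= d1; have := d1 isT.
Qed.

Definition rep (T : eqType) (u v : T) (l : seq T) := exists k, l = flatten (nseq k [:: u; v]).

Lemma rep_cat (T : eqType) (u v : T) l1 l2 : rep u v l1 -> rep u v l2 -> rep u v (l1 ++ l2).
Proof. by move=> [k1 ->] [k2 ->]; exists (k1 + k2); rewrite nseqD flatten_cat. Qed.

Lemma rep_flatten (T : eqType) (u v : T) (L : seq (seq T)) :
  (forall l, l \in L -> rep u v l) -> rep u v (flatten L).
Proof.
elim: L => [|l L IH] H /=; first by exists 0.
apply: rep_cat; first by apply: H; rewrite inE eqxx.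
by apply: IH => l' m; apply: H; rewrite inE m orbT.
Qed.

Lemma rep_sorted (T : eqType) (u v : T) l : u != v -> rep u v l -> sorted (fun a b => a != b) l.
Proof.
move=> uv [k ->]; case: k => [|k] //=.
suff : forall k, path (fun a b => a != b) v (flatten (nseq k [:: u; v])).
  by move=> H; rewrite /= uv /=; apply: H.
elim=> [|j IH] //=; by rewrite eq_sym uv /=.
Qed.

Lemma part_edge (T : finType) (E : rel T) (h : T -> nat) x y u v :
  orient E h u v -> rep u v [seq z <- part E h x y | pr2 u v z].
Proof.
move=> o; rewrite /part; case: (reach E h x y).
  by rewrite Q4_edge //; exists 2.
rewrite filter_cat (lin_edge (@anc_ds T E h y) o) (lin_edge (@anc_ds T E h x) o).
by exists 2.
Qed.

Lemma W_edge (T : finType) (E : rel T) (h : T -> nat) u v :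
  orient E h u v -> rep u v [seq z <- Wd E h | pr2 u v z].
Proof.
move=> o; have huv : h u < h v by case/andP: o.
rewrite /Wd filter_cat pair_filter // filter_flatten.
apply: (@rep_cat _ _ _ [:: u; v]); first by exists 1.
apply: rep_flatten => l /mapP[P /allpairsPdep[x [y [_ _ ->]]] ->].
exact: part_edge.
Qed.

Lemma nsorted_aa (T : eqType) (l1 l2 : seq T) a :
  ~~ sorted (fun u v => u != v) (l1 ++ a :: a :: l2).
Proof.
case: l1 => [|b l1] /=; first by rewrite eqxx.
by rewrite cat_path /= eqxx !andbF.
Qed.

Lemma flatten_aa (T : eqType) (p : pred T) (L : seq (seq T)) P l1 l2 a :
  P \in L -> [seq z <- P | p z] = l1 ++ a :: a :: l2 ->
  exists l1' l2', flatten [seq [seq z <- Q | p z] | Q <- L] = l1' ++ a :: a :: l2'.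
Proof.
move=> /splitPr[L1 L2] e; rewrite map_cat flatten_cat /= e.
exists (flatten [seq [seq z <- Q | p z] | Q <- L1] ++ l1).
exists (l2 ++ flatten [seq [seq z <- Q | p z] | Q <- L2]).
by rewrite -!catA.
Qed.

Lemma one_in (T : eqType) (S : pred T) x y : x != y -> S x -> ~~ S y ->
  forall z, S z && pr2 x y z = (z == x).
Proof.
move=> xy Sx Sy z; rewrite /pr2; case: (eqVneq z x) => [->|zx] /=; first by rewrite Sx.
by case: (eqVneq z y) => [->|zy] /=; rewrite ?andbF // (negbTE Sy).
Qed.

Lemma one_in2 (T : eqType) (S : pred T) x y : x != y -> S y -> ~~ S x ->
  forall z, S z && pr2 x y z = (z == y).
Proof.
move=> xy Sy Sx z; rewrite /pr2; case: (eqVneq z y) => [->|zy] /=; first by rewrite Sy orbT.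
by case: (eqVneq z x) => [->|zx] /=; rewrite ?andbF // (negbTE Sx).
Qed.

Lemma pr2C (T : eqType) (l : seq T) x y :
  [seq z <- l | pr2 x y z] = [seq z <- l | pr2 y x z].
Proof. by apply: eq_filter => z; rewrite /pr2 orbC. Qed.

Lemma Q4_nonedge (T : finType) (E : rel T) (h : T -> nat) x y :
  STprop E h -> reach E h x y -> x != y -> ~~ E x y ->
  [seq z <- Q4 E h x | pr2 x y z] = [:: x; x; y; y].
Proof.
move=> ST rxy xy nE.
have Ax : anc E h x x by exact: connect0.
have Cx : cset E h x x by exact: anc_sub.
have Cy : ~~ cset E h x y.
  apply/negP => /existsP[z /andP[/orP[rz | /existsP[a /andP[ra o]]] ryz]].
    have r1 : reach E h y x by exact: connect_trans ryz rz.
    have := reach_lt rxy xy; have := reach_le r1; lia.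
  case/andP: o => Eaz haz.
  by move: nE; rewrite (ST a z x y Eaz haz ra rxy ryz xy).
have Ay : ~~ anc E h x y by apply/negP => /anc_sub; apply/negP.
rewrite /Q4 !filter_cat.
rewrite (blk_filter1 _ (one_in xy Cx Cy)) (blk_filter1 _ (one_in xy Ax Ay)).
have nCx : ~~ predC (cset E h x) x by rewrite /= Cx.
have nAx : ~~ predC (anc E h x) x by rewrite /= Ax.
by rewrite (blk_filter1 _ (one_in2 xy Cy nCx)) (blk_filter1 _ (one_in2 xy Ay nAx)).
Qed.

Lemma lin_nonedge (T : finType) (E : rel T) (h : T -> nat) (D : pred T) x y :
  x != y -> D x -> ~~ D y -> [seq z <- lin h D | pr2 x y z] = [:: x; y].
Proof.
move=> xy Dx Dy; rewrite /lin filter_cat (blk_filter1 _ (one_in xy Dx Dy)).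
have nDx : ~~ predC D x by rewrite /= Dx.
by rewrite (blk_filter1 _ (one_in2 xy Dy nDx)).
Qed.

Lemma W_nonedge (T : finType) (E : rel T) (h : T -> nat) x y :
  STprop E h -> x != y -> ~~ E x y -> (forall u v, E u v = E v u) ->
  ~~ sorted (fun u v => u != v) [seq z <- Wd E h | pr2 x y z].
Proof.
move=> ST xy nE Esym.
have yx : y != x by rewrite eq_sym.
have nE' : ~~ E y x by rewrite Esym.
suff [P [l1 [l2 [a [PL e]]]]] : exists P l1 l2 a,
    P \in [seq part E h x y | x <- enum T, y <- enum T] /\
    [seq z <- P | pr2 x y z] = l1 ++ a :: a :: l2.
  have [l1' [l2' e']] := flatten_aa PL e.
  by rewrite /Wd filter_cat filter_flatten e' catA nsorted_aa.
case rxy: (reach E h x y).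
  exists (part E h x y), [::], [:: y; y], x; split.
    by apply: allpairs_f; rewrite mem_enum.
  by rewrite /part rxy Q4_nonedge.
case ryx: (reach E h y x).
  exists (part E h y x), [::], [:: x; x], y; split.
    by apply: allpairs_f; rewrite mem_enum.
  by rewrite /part ryx pr2C Q4_nonedge.
exists (part E h x y), [:: y], [:: y], x; split.
  by apply: allpairs_f; rewrite mem_enum.
have Ay : anc E h y y by exact: connect0.
have Ax : anc E h x x by exact: connect0.
have nAyx : ~~ anc E h y x by rewrite /anc rxy.
have nAxy : ~~ anc E h x y by rewrite /anc ryx.
rewrite /part rxy filter_cat (@lin_nonedge T E h (anc E h x) x y xy Ax nAxy).
by rewrite pr2C (@lin_nonedge T E h (anc E h y) y x yx Ay nAyx).
Qed.

Theorem partA (T : finType) (E : rel T) (h : T -> nat) :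
  (forall u v, E u v = E v u) -> (forall u v, E u v -> h u != h v) -> STprop E h ->
  word_representable E.
Proof.
move=> Esym Eh ST; exists (Wd E h); split.
  by move=> x; rewrite /Wd mem_cat mem_sseq.
move=> x y xy; rewrite /alternate.
have -> : [seq z <- Wd E h | (z == x) || (z == y)] = [seq z <- Wd E h | pr2 x y z] by [].
split.
  move=> Exy; have := Eh x y Exy; rewrite neq_ltn => /orP[] hl.
    by apply: (rep_sorted xy); apply: W_edge; rewrite /orient Exy hl.
  rewrite pr2C; apply: (rep_sorted (u := y) (v := x)); first by rewrite eq_sym.
  by apply: W_edge; rewrite /orient Esym Exy hl.
move=> so; apply/negPn/negP => nE.
by move: so; apply/negP; apply: W_nonedge.
Qed.

Lemma path_hm (T : finType) (E : rel T) (h : T -> nat) (m : nat) u p :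
  (forall u v, E u v -> h u < h v -> m <= h v - h u) ->
  path (orient E h) u p -> h u + m * size p <= h (last u p).
Proof.
move=> sp; elim: p u => [|w p IH] u /=; first by rewrite muln0 addn0.
move=> /andP[/andP[Euw huw] pw]; have := IH w pw; have := sp u w Euw huw.
rewrite mulnS; lia.
Qed.

Theorem partB (T : finType) (E : rel T) (h : T -> nat) (m M : nat) :
  0 < m -> M < 3 * m ->
  (forall u v, E u v -> h u < h v -> m <= h v - h u /\ h v - h u <= M) ->
  STprop E h.
Proof.
move=> m0 Mm sp a z x y Eaz haz rax rxy ryz xy.
have spl : forall u v, E u v -> h u < h v -> m <= h v - h u by move=> u v e l; case: (sp u v e l).
case/connectP: rax => p1 pp1 e1; case/connectP: rxy => p2 pp2 e2.
case/connectP: ryz => p3 pp3 e3.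
have h1 := path_hm spl pp1; have h2 := path_hm spl pp2; have h3 := path_hm spl pp3.
rewrite -e1 in h1; rewrite -e2 in h2; rewrite -e3 in h3.
have [_ hM] := sp a z Eaz haz.
have : size p1 + size p2 + size p3 <= 2.
  have : m * (size p1 + size p2 + size p3) < 3 * m by rewrite !mulnDr; lia.
  by rewrite mulnC ltn_pmul2r // => /ltnSE.
case: p2 pp2 e2 {h2} => [|w [|w' p2]] /= pp2 e2 hs.
- by move: xy; rewrite e2 eqxx.
- by move: pp2 => /andP[/andP[Exw _] _]; rewrite e2.
- have s1 : size p1 = 0 by move: hs; lia.
  have s3 : size p3 = 0 by move: hs; lia.
  move/size0nil: s1 => s1; move/size0nil: s3 => s3.
  by rewrite s1 /= in e1; rewrite s3 /= in e3; rewrite e1 -e3.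
Qed.

Definition spanset (s : nat) : bool := [|| s == 2, s == 4, s == 5, s == 6 | s == 8].

Lemma reach_inv (T : finType) (E : rel T) (h : T -> nat) (e : nat) u v :
  (forall u v, E u v -> h u < h v -> exists s, spanset s /\ h v - h u = e * s) ->
  reach E h u v -> exists t, h v = h u + e * t /\ t != 1 /\ t != 3.
Proof.
move=> sp /connectP[p pp ->]; elim: p u pp => [|w p IH] u /=.
  by move=> _; exists 0; rewrite muln0 addn0.
move=> /andP[/andP[Euw huw] pw]; have [t [ht t13]] := IH w pw.
have [s [ss hs]] := sp u w Euw huw.
exists (s + t); rewrite mulnDr; split; first lia.
move: ss t13; rewrite /spanset; lia.
Qed.

Theorem partC (T : finType) (E : rel T) (h : T -> nat) (e : nat) :
  0 < e -> injective h ->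
  (forall u v, E u v -> h u < h v -> exists s, spanset s /\ h v - h u = e * s) ->
  (forall u v, h u < h v -> (exists s, spanset s /\ h v - h u = e * s) -> E u v) ->
  STprop E h.
Proof.
move=> e0 hinj sp1 sp2 a z x y Eaz haz rax rxy ryz xy.
have [t1 [h1 c1]] := reach_inv sp1 rax.
have [t2 [h2 c2]] := reach_inv sp1 rxy.
have [t3 [h3 c3]] := reach_inv sp1 ryz.
have [s [ss hs]] := sp1 a z Eaz haz.
have est : e * s = e * (t1 + t2 + t3) by rewrite !mulnDr; lia.
move/eqP: est; rewrite eqn_pmul2l // => /eqP est.
have t2n0 : t2 != 0.
  apply/negP => /eqP t20; move: h2; rewrite t20 muln0 addn0 => /hinj yx.
  by move: xy; rewrite yx eqxx.
have hxy : h x < h y.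
  rewrite h2; rewrite -[X in X < _]addn0 ltn_add2l muln_gt0 e0 /=; lia.
case st2: (spanset t2).
  apply: sp2 => //; exists t2; split => //; lia.
exfalso; move: ss st2 c1 c2 c3 t2n0; rewrite /spanset; lia.
Qed.

Definition dn (n x : nat) : nat := minn (x %% n) (n - x %% n).
Definition good (n p c : nat) : bool := n < 4 * dn n (p * c).

Lemma dn_small n x : x < n -> dn n x = minn x (n - x).
Proof. by move=> xn; rewrite /dn modn_small. Qed.

Lemma dn_mod n x : dn n (x %% n) = dn n x.
Proof. by rewrite /dn modn_mod. Qed.

Lemma dn_scale e n x : 0 < e -> dn (e * n) (e * x) = e * dn n x.
Proof.
move=> e0; rewrite /dn -muln_modr -mulnBr.
by rewrite minnMr.
Qed.

Lemma mod_big n z : n <= z -> z < 2 * n -> z %% n = z - n.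
Proof.
move=> h1 h2; have -> : z = (z - n) + n by lia.
rewrite modnDr modn_small; lia.
Qed.

Lemma bad_shift n y : 0 < n -> 4 * dn n y <= n -> (y + n %/ 4) %% n <= 2 * (n %/ 4).
Proof.
move=> n0; rewrite /dn -(modnDml y).
have yl : y %% n < n by rewrite ltn_mod.
move: (y %% n) yl => y' yl hb.
case: (leqP n (y' + n %/ 4)) => c.
  rewrite mod_big //; lia.
rewrite modn_small //; lia.
Qed.

Lemma walk n x d L : 0 < n -> 0 < d -> 2 * d < n ->
  (forall j, j <= L -> 4 * dn n (x + j * d) <= n) -> 2 * L * d <= n.
Proof.
move=> n0 d0 dn2 H.
set T := n %/ 4.
set s := fun j => (x + j * d + T) %% n.
have sb : forall j, j <= L -> s j <= 2 * T by move=> j jL; apply: bad_shift => //; apply: H.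
have step : forall j, j < L -> s j.+1 = s j + d.
  move=> j jL; rewrite /s.
  have -> : x + j.+1 * d + T = (x + j * d + T) + d by rewrite mulSn; lia.
  rewrite -(modnDml (x + j * d + T) d n) modn_small //.
  have := sb j (ltnW jL); rewrite /s /T; move: ((x + j * d + n %/ 4) %% n) => t; lia.
have sj : forall j, j <= L -> s j = s 0 + j * d.
  elim=> [|j IH] jL; first by rewrite mul0n addn0.
  by rewrite step // IH ?(ltnW jL) // mulSn; lia.
have := sj L (leqnn L); have := sb L (leqnn L); rewrite /T.
rewrite -mulnA; move: (s L) (s 0) (L * d) => a b c; lia.
Qed.

Lemma inv_ex a m : 0 < a -> coprime a m -> exists i, (a * i) %% m = 1 %% m.
Proof.
move=> a0 /(coprimeP _ a0) [[u1 u2] /= e].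
exists u1; have -> : a * u1 = u2 * m + 1 by rewrite mulnC; lia.
by rewrite modnMDl.
Qed.

Lemma dn_good n J : 0 < n -> n < 4 * J -> 4 * J < 3 * n -> n < 4 * dn n J.
Proof. move=> n0 h1 h2; rewrite dn_small; lia. Qed.

Lemma walk_case n p q : odd n -> 7 <= n -> 0 < p -> p < q -> 2 * q < n ->
  coprime p n -> coprime q n -> exists c, good n p c /\ good n q c.
Proof.
move=> on n7 p0 pq qn cp cq.
have n1 : 1 %% n = 1 by rewrite modn_small //; lia.
have [m pm] := inv_ex p0 cp; rewrite n1 in pm.
set del := (q * m) %% n.
have delp : (del * p) %% n = q.
  rewrite /del modnMml -mulnA (mulnC m) -modnMmr pm muln1 modn_small //; lia.
have dl : del < n by rewrite /del ltn_mod; lia.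
have d0 : del != 0 by apply/eqP => e; move: delp; rewrite e mul0n mod0n; lia.
have d1 : del != 1 by apply/eqP => e; move: delp; rewrite e mul1n modn_small; lia.
have d2 : del != n.-1.
  apply/eqP => e.
  have : (del * p + p) %% n = 0.
    by rewrite e addnC -mulSn prednK ?modnMr //; lia.
  by rewrite -modnDml delp modn_small //; lia.
have [m' [e [d [pe [qd [dd1 [dd2 eJ]]]]]]] : exists m' e d, (p * m') %% n = e /\
    (q * m') %% n = d /\ 1 < d /\ 2 * d < n /\
    (forall J, 0 < J -> J < n -> dn n (J * e) = minn J (n - J)).
  case: (ltnP (2 * del) n) => hd.
    exists m, 1, del; do 3 (split => //); first lia.
    by split => // J J0 Jn; rewrite muln1 dn_small.
  exists (m * n.-1), n.-1, (n - del); split.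
    by rewrite mulnA -modnMml pm mul1n modn_small //; lia.
  split.
    rewrite mulnA -modnMml -/del.
    have -> : del * n.-1 = (del - 1) * n + (n - del).
      have -> : n.-1 = n - 1 by lia.
      have d00 : 0 < del by lia.
      rewrite mulnBr muln1 mulnBl mul1n.
      have : n <= del * n by rewrite leq_pmull.
      move: (del * n) => X; lia.
    by rewrite modnMDl modn_small //; lia.
  split; first lia.
  split; first lia.
  move=> J J0 Jn.
  have -> : J * n.-1 = (J - 1) * n + (n - J).
    have -> : n.-1 = n - 1 by lia.
    rewrite mulnBr muln1 mulnBl mul1n.
    have : n <= J * n by rewrite leq_pmull.
    move: (J * n) => X; lia.
  rewrite /dn modnMDl modn_small; last by lia.
  rewrite minnC; congr minn; lia.
set j0 := n %/ 4 + 1.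
set L := n %/ 2 - 1.
have Pg : forall j, j <= L -> good n p ((j0 + j) * m').
  move=> j jL; have hn : n %% 2 = 1 by rewrite modn2 on.
  rewrite /good mulnCA -dn_mod -modnMmr pe dn_mod eJ; rewrite /j0 /L in jL *;
    clear -hn jL n7; lia.
case: (boolP [exists j : 'I_L.+1, n < 4 * dn n (j0 * d + j * d)]).
  move=> /existsP[j gj]; exists ((j0 + j) * m'); split; first by apply: Pg; rewrite -ltnS.
  by rewrite /good mulnCA -dn_mod -modnMmr qd dn_mod mulnDl.
rewrite negb_exists => /forallP H.
have W : 2 * L * d <= n.
  apply: (@walk n (j0 * d)) => //; try lia.
  move=> j jL; have := H (Ordinal (n := L.+1) (m := j) jL) => /= hh; rewrite leqNgt; exact: hh.
exfalso; move: W; rewrite /L; have hn : n %% 2 = 1 by rewrite modn2 on.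
clear -hn dd1 n7; have : 2 * (n %/ 2 - 1) * 2 <= 2 * (n %/ 2 - 1) * d by rewrite leq_mul2l dd1 orbT.
move: (2 * (n %/ 2 - 1) * d) => X; lia.
Qed.

Lemma oddm x : odd x -> x %% 2 = 1.
Proof. by rewrite modn2 => ->. Qed.

Lemma modsplit r n2 h X : r < n2 -> 0 < h ->
  (r + n2 * X) %% (n2 * h) = r + n2 * (X %% h).
Proof.
move=> rn h0.
have -> : r + n2 * X = (X %/ h) * (n2 * h) + (r + n2 * (X %% h)).
  rewrite {1}(divn_eq X h) mulnDr mulnA (mulnC n2 (X %/ h)) -mulnA; lia.
rewrite modnMDl modn_small //.
have hX : X %% h < h by rewrite ltn_mod.
have A : n2 * (X %% h) <= n2 * (h - 1) by rewrite leq_mul2l; apply/orP; right; lia.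
rewrite mulnBr muln1 in A.
have B : n2 <= n2 * h by rewrite leq_pmulr.
move: (n2 * (X %% h)) (n2 * h) A B => P Q; lia.
Qed.

Lemma coset n p q : odd n -> 0 < p -> 0 < q -> 2 * q < n ->
  coprime p (gcdn q n) -> 1 < gcdn q n -> exists c, good n p c /\ good n q c.
Proof.
move=> on p0 q0 qn cph h1.
have n0 : 0 < n by lia.
set h := gcdn q n in cph h1.
have hn : n = (n %/ h) * h by rewrite divnK // dvdn_gcdr.
have hq : q = (q %/ h) * h by rewrite divnK // dvdn_gcdl.
set n2 := n %/ h in hn; set q1 := q %/ h in hq.
have oh : odd h by apply: (dvdn_odd (dvdn_gcdr q n)).
have h3 : 3 <= h by move: (oddm oh) h1; lia.
have hq' : h <= q by apply: dvdn_leq => //; apply: dvdn_gcdl.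
have n23 : 2 < n2.
  have : 2 * h < n2 * h by rewrite -hn; lia.
  by rewrite ltn_pmul2r //; lia.
have n2n : 3 * n2 <= n by rewrite hn mulnC leq_mul2l h3 orbT.
have on2 : odd n2 by apply: (dvdn_odd _ on); rewrite hn dvdn_mulr.
have q10 : 0 < q1 by move: q0; rewrite hq muln_gt0 => /andP[].
have cq1 : coprime q1 n2.
  have : gcdn q1 n2 * h = h by rewrite muln_gcdl -hq -hn.
  by rewrite /coprime -{2}(mul1n h) => /eqP; rewrite eqn_pmul2r //; lia.
have [i2 qi2] := inv_ex q10 cq1; rewrite (@modn_small 1) in qi2; last by lia.
set c2 := i2 * (n2 %/ 2).
have Qg : forall k, good n q (c2 + n2 * k).
  move=> k; rewrite /good /dn.
  have -> : (q * (c2 + n2 * k)) %% n = (n2 %/ 2) * h.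
    rewrite hq hn mulnAC -muln_modl; congr (_ * _).
    rewrite mulnDr (mulnCA q1 n2 k) (mulnC n2) addnC modnMDl /c2 mulnA.
    rewrite -modnMml qi2 mul1n modn_small //.
    by apply: ltn_Pdiv; lia.
  have hn2 : n2 = 2 * (n2 %/ 2) + 1 by move: (oddm on2); lia.
  have t1 : 1 <= n2 %/ 2 by lia.
  set t := n2 %/ 2 in hn2 t1 *.
  rewrite hn hn2 mulnDl mul1n -mulnA.
  have : h <= t * h by rewrite leq_pmull.
  move: (t * h) => X; lia.
set base := p * c2.
set r := base %% n2; set s := base %/ n2.
have rn2 : r < n2 by rewrite /r ltn_mod; lia.
set w := (n %/ 4 - r) %/ n2.
set u := w + 1.
have Wb1 : w * n2 <= n %/ 4 - r by rewrite /w leq_divM.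
have Wb2 : n %/ 4 - r < w * n2 + n2.
  by rewrite /w {1}(divn_eq (n %/ 4 - r) n2) ltn_add2l ltn_mod; lia.
have Pv : n < 4 * (r + n2 * u) /\ 4 * (r + n2 * u) < 3 * n.
  rewrite /u (mulnDr n2) muln1 (mulnC n2 w); move: (w * n2) Wb1 Wb2 => W Wb1 Wb2.
  clearbody r; clear -Wb1 Wb2 rn2 n2n; lia.
have uh : u < h.
  have : n2 * u < n2 * h.
    rewrite -hn; case: Pv => _; move: (n2 * u) => Y; clearbody r; clear -rn2; lia.
  by rewrite ltn_mul2l => /andP[].
have hp : coprime p h by [].
have [i pi] := inv_ex p0 hp; rewrite (@modn_small 1) in pi; last by lia.
set k := i * (u + h - s %% h).
exists (c2 + n2 * k); split; last exact: Qg.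
rewrite /good -dn_mod.
have -> : (p * (c2 + n2 * k)) %% n = r + n2 * u.
  have -> : p * (c2 + n2 * k) = r + n2 * (s + p * k).
    rewrite mulnDr -/base {1}(divn_eq base n2) -/r -/s mulnCA; lia.
  rewrite hn modsplit //; last by lia.
  congr (_ + n2 * _).
  rewrite /k mulnA -modnDmr -modnMml pi mul1n modnDmr.
  rewrite {1}(divn_eq s h) -addnA.
  have -> : s %% h + (u + h - s %% h) = u + h.
    have : s %% h < h by rewrite ltn_mod; lia.
    move: (s %% h) => S HS; clearbody h u; clear -HS; lia.
  by rewrite modnMDl modnDr modn_small.
case: Pv => P1 P2; exact: (dn_good n0 P1 P2).
Qed.

Lemma good_scale n p c e : 0 < e -> good (n * e) (p * e) c = good n p c.
Proof.
move=> e0; rewrite /good.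
have -> : p * e * c = e * (p * c) by rewrite mulnAC mulnC.
by rewrite (mulnC n e) dn_scale // mulnCA ltn_pmul2l.
Qed.

Theorem NT n p q : odd n -> 0 < p -> p < q -> 2 * q < n ->
  ~~ ((n == 5 * p) && (q == 2 * p)) -> exists c, good n p c /\ good n q c.
Proof.
move=> on p0 pq qn nex.
set e := gcdn p (gcdn q n).
have e0 : 0 < e by rewrite gcdn_gt0 p0.
have ep : e %| p by apply: dvdn_gcdl.
have eq' : e %| q by apply: dvdn_trans (dvdn_gcdr _ _) (dvdn_gcdl _ _).
have en : e %| n by apply: dvdn_trans (dvdn_gcdr _ _) (dvdn_gcdr _ _).
have hp := esym (divnK ep); have hq := esym (divnK eq'); have hn := esym (divnK en).
set p' := p %/ e in hp; set q' := q %/ e in hq; set n' := n %/ e in hn.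
have g1 : gcdn p' (gcdn q' n') = 1.
  have : gcdn p' (gcdn q' n') * e = e * 1.
    by rewrite !muln_gcdl -hp -hq -hn !muln1.
  by rewrite mulnC => /eqP; rewrite eqn_pmul2l // => /eqP.
have p'0 : 0 < p' by move: p0; rewrite hp muln_gt0 => /andP[].
have pq' : p' < q' by move: pq; rewrite hp hq ltn_pmul2r.
have qn' : 2 * q' < n' by move: qn; rewrite hq hn mulnA ltn_pmul2r.
have on' : odd n' by apply: (dvdn_odd _ on); rewrite {1}hn dvdn_mulr.
suff [c [g1' g2']] : exists c, good n' p' c /\ good n' q' c.
  by exists c; rewrite hp hq hn !good_scale.
have n'7 : 7 <= n'.
  have : n' != 5.
    apply/negP => /eqP n5; move: nex; rewrite hn hp hq n5.
    have -> : p' = 1 by lia.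
    have -> : q' = 2 by lia.
    by rewrite mul1n !eqxx.
  move: (oddm on'); lia.
case: (eqVneq (gcdn q' n') 1) => gq.
  case: (eqVneq (gcdn p' n') 1) => gp.
    by apply: walk_case => //; rewrite /coprime ?gp ?gq.
  have [c [c1 c2]] : exists c, good n' q' c /\ good n' p' c.
    apply: coset => //; try lia.
      by rewrite /coprime gcdnCA g1.
    have : 0 < gcdn p' n' by rewrite gcdn_gt0 p'0.
    move: gp; lia.
  by exists c.
have q'0 : 0 < q' by lia.
have cpg : coprime p' (gcdn q' n') by rewrite /coprime g1.
have g2 : 1 < gcdn q' n'.
  have : 0 < gcdn q' n' by rewrite gcdn_gt0 q'0.
  move: gq; lia.
exact: (coset on' p'0 q'0 qn' cpg g2).
Qed.

Lemma natdist_sym i j : natdist i j = natdist j i.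
Proof. rewrite /natdist; case: (leqP i j); case: (leqP j i); lia. Qed.

Lemma circ_sym m R (u v : 'I_m) : circulant R u v = circulant R v u.
Proof. by rewrite /circulant eq_sym natdist_sym. Qed.

Lemma circ_dist m R (u v : 'I_m) : circulant R u v ->
  u != v /\ minn (natdist u v) (m - natdist u v) \in R.
Proof. by case/andP. Qed.

Lemma odd_case n a b : odd n -> odd a -> odd b ->
  word_representable (@circulant (2 * n) [:: a; b; n]).
Proof.
move=> on oa ob.
set h := fun u : 'I_(2 * n) => (u : nat) %% 2.
have Eh : forall u v, circulant [:: a; b; n] u v -> h u != h v.
  move=> u v /circ_dist[uv]; rewrite !inE /h /natdist.
  have := ltn_ord u; have := ltn_ord v; move: (oddm on) (oddm oa) (oddm ob).
  have : (u : nat) != v by [].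
  move: (u : nat) (v : nat) => x y; case: (leqP x y); lia.
apply: (partA (h := h)) => //; first exact: circ_sym.
apply: (@partB _ _ _ 1 1) => // u v e l.
have : h v < 2 by rewrite /h ltn_mod.
lia.
Qed.

Lemma span_lem N c u v : u < N -> v < N ->
  dn N (c * natdist u v) <= natdist ((c * u) %% N) ((c * v) %% N) <=
  N - dn N (c * natdist u v).
Proof.
wlog : u v / v <= u.
  move=> W un vn; case: (leqP v u) => l; first exact: W.
  by rewrite natdist_sym (natdist_sym ((c * u) %% N)); apply: W => //; lia.
move=> vu un vn.
have N0 : 0 < N by lia.
have -> : natdist u v = u - v by rewrite /natdist; case: (leqP u v); lia.
have -> : c * u = c * v + c * (u - v) by rewrite -mulnDr subnKC.
rewrite /dn -modnDm.
have hA : (c * v) %% N < N by rewrite ltn_mod.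
have hr : (c * (u - v)) %% N < N by rewrite ltn_mod.
move: ((c * v) %% N) ((c * (u - v)) %% N) hA hr => A r hA hr.
case: (ltnP (A + r) N) => s.
  rewrite modn_small // /natdist; case: (leqP (A + r) A); lia.
rewrite mod_big //; last lia.
rewrite /natdist; case: (leqP (A + r - N) A); lia.
Qed.

Lemma dn_neg N c d : d <= N -> dn N (c * (N - d)) = dn N (c * d).
Proof.
move=> dN; case: (posnP N) => [N0|N0].
  by move: dN; rewrite N0 leqn0 => /eqP ->.
have e : ((c * (N - d)) %% N + (c * d) %% N) %% N = 0.
  rewrite modnDm -mulnDr subnK // modnMl //.
have hs : (c * (N - d)) %% N < N by rewrite ltn_mod.
have hr : (c * d) %% N < N by rewrite ltn_mod.
rewrite /dn; move: ((c * (N - d)) %% N) ((c * d) %% N) hs hr e => s r hs hr.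
case: (ltnP (s + r) N) => l.
  rewrite modn_small //; lia.
rewrite mod_big //; lia.
Qed.

Lemma even_main n a b c : odd n ->
  (forall k, k \in [:: a; b; n] -> n %/ 2 < dn (2 * n) (c * k)) ->
  word_representable (@circulant (2 * n) [:: a; b; n]).
Proof.
move=> on hk.
have hn : n = 2 * (n %/ 2) + 1 by move: (oddm on); lia.
set N := 2 * n.
set h := fun u : 'I_N => (c * u) %% N.
have key : forall u v : 'I_N, circulant [:: a; b; n] u v ->
    n %/ 2 < natdist (h u) (h v) /\ natdist (h u) (h v) <= N - (n %/ 2).+1.
  move=> u v /circ_dist[uv km].
  have := span_lem c (ltn_ord u) (ltn_ord v).
  set d := natdist u v.
  have dN : d <= N.
    rewrite /d /natdist; have := ltn_ord u; have := ltn_ord v; rewrite -/N.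
    move: (u : nat) (v : nat) => x y; case: (leqP x y); lia.
  have e : dn N (c * minn d (N - d)) = dn N (c * d).
    by case: (leqP d (N - d)) => l //; rewrite dn_neg.
  have := hk _ km; rewrite -/N e /h; lia.
apply: (partA (h := h)); first exact: circ_sym.
  by move=> u v /key [k1 k2]; apply/eqP => e; move: k1; rewrite e /natdist leqnn subnn.
apply: (@partB _ _ _ (n %/ 2).+1 (N - (n %/ 2).+1)) => //.
  rewrite /N; lia.
move=> u v /key [k1 k2] l.
have : natdist (h u) (h v) = h v - h u by rewrite /natdist (ltnW l).
lia.
Qed.

Lemma exc_case n p a b : 0 < p -> n = 5 * p ->
  ((a == 2 * p) && (b == 4 * p)) || ((a == 4 * p) && (b == 2 * p)) ->
  word_representable (@circulant (2 * n) [:: a; b; n]).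
Proof.
move=> p0 n5 hab.
set h := fun u : 'I_(2 * n) => (u : nat).
apply: (partA (h := h)); first exact: circ_sym.
  by move=> u v /circ_dist[uv _].
apply: (@partC _ _ _ p) => //; first exact: val_inj.
  move=> u v /circ_dist[_ km] l.
  have ev : natdist u v = h v - h u by rewrite /natdist /h (ltnW l).
  move: km; rewrite ev !inE; have := ltn_ord v; rewrite /h.
  move=> vn km.
  have : (v - u = p * 2) \/ (v - u = p * 4) \/ (v - u = p * 5) \/ (v - u = p * 6) \/
         (v - u = p * 8) by move: hab km; lia.
  case=> [e|[e|[e|[e|e]]]]; [exists 2|exists 4|exists 5|exists 6|exists 8]; by rewrite e.
move=> u v l [s [ss e]].
rewrite /circulant; apply/andP; split.
  by apply/eqP => uv; move: l; rewrite /h uv ltnn.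
have ev : natdist u v = h v - h u by rewrite /natdist /h (ltnW l).
rewrite ev e !inE; have := ltn_ord v; rewrite /h => vn.
have : s = 2 \/ s = 4 \/ s = 5 \/ s = 6 \/ s = 8 by move: ss; rewrite /spanset; lia.
by case=> [->|[->|[->|[->|->]]]]; move: hab; lia.
Qed.

Lemma rep_ext (T : finType) (E E' : rel T) : (forall u v, E u v = E' u v) ->
  word_representable E -> word_representable E'.
Proof.
move=> ee [w [h1 h2]]; exists w; split => // x y xy; rewrite -ee; exact: h2.
Qed.

Unset Implicit Arguments.

Theorem theorem17 (n a b : nat) :
  odd n -> 0 < a < n -> 0 < b < n -> a != b -> odd a = odd b ->
  word_representable (@circulant (2 * n) [:: a; b; n]).
Proof.
wlog : a b / a < b.
  move=> W on ha hb ab oab; case: (ltnP a b) => l; first exact: W.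
  apply: (rep_ext (E := @circulant (2 * n) [:: b; a; n])).
    by move=> u v; rewrite /circulant !inE; congr (_ && _); rewrite orbA (orbC (_ == b)) -orbA.
  apply: W => //; [lia | by rewrite eq_sym].
move=> lab on /andP[a0 an] /andP[b0 bn] ab.
case oa: (odd a) => ob.
  by apply: odd_case.
have ha : a = 2 * (a %/ 2).
  have : a %% 2 = 0 by rewrite modn2 oa.
  lia.
have hb : b = 2 * (b %/ 2).
  have : b %% 2 = 0 by rewrite modn2 -ob.
  lia.
set p := a %/ 2 in ha; set q := b %/ 2 in hb.
have p0 : 0 < p by lia.
have pq : p < q by lia.
have qn : 2 * q < n by lia.
case ex: ((n == 5 * p) && (q == 2 * p)).
  apply: (@exc_case n p) => //; first by move: ex; lia.
  by apply/orP; left; move: ex; lia.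
have [c0 [g1 g2]] := NT on p0 pq qn (negbT ex).
set c := if odd c0 then c0 else c0 + n.
have oc : odd c by rewrite /c; case: ifP => // o; rewrite oddD o on.
have gc : forall r, good n r c0 -> good n r c.
  move=> r g; rewrite /c; case: ifP => // _.
  by rewrite /good -dn_mod mulnDr addnC modnMDl dn_mod.
apply: (@even_main n a b c on) => k.
have n0 : 0 < n by lia.
have dk : forall r, good n r c0 -> n %/ 2 < dn (2 * n) (c * (2 * r)).
  move=> r /gc; rewrite /good mulnCA (mulnC c r) dn_scale //; lia.
rewrite !inE => /orP[/eqP ->|/orP[/eqP ->|/eqP ->]]; rewrite ?ha ?hb; try exact: dk.
have cn : (c * n) %% (2 * n) = n.
  have hc : c = 2 * (c %/ 2) + 1 by move: (oddm oc); lia.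
  rewrite hc mulnDl mul1n.
  have -> : 2 * (c %/ 2) * n = (c %/ 2) * (2 * n) by rewrite mulnAC mulnC.
  rewrite modnMDl modn_small //; lia.
rewrite /dn cn; lia.
Qed.
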